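(* Let $n,k\ge1$, $N=2^n$, and let $\mathcal{C}$ be a class of polynomials in $\mathbb{F}[X_1,\ldots,X_N]$ such that for every $F\in\mathcal{C}$, the shifted polynomial $F(X+\mathbf{1})$ (with $\mathbf{1}$ the all-ones vector) contains a monomial whose support has size at most $k$. Then for every $F\in\mathcal{C}$ with $F\not\equiv 0$, we have $F\circ\mathcal{G}^{\mathrm{SSSV}}_{n,k}(y,z)\not\equiv0$.
   Context: Let $P(z_1,\ldots,z_n,x_1,\ldots,x_n)=\prod_{i=1}^n(z_ix_i+(1-z_i))$, $Q^{\mathrm{SSV}}_{n,k}(y,z,x)=\sum_{j=1}^k y_jP(z_j,x)$ with $z_j=(z_{j,1},\ldots,z_{j,n})$, and $Q^{\mathrm{SSSV}}_{n,k}(y,z,x)=Q^{\mathrm{SSV}}_{n,k}(y,z,x)+\prod_{i=1}^n(x_i+1)$. $\mathcal{G}^{\mathrm{SSSV}}_{n,k}(y,z)$ is the coefficient vector of $Q^{\mathrm{SSSV}}_{n,k}$ viewed as a multilinear polynomial in $x$; its $2^n=N$ coordinates, indexed by subsets $S\subseteq[n]$, are identified with the variables $X_1,\ldots,X_N$ (via $i-1=\sum_{k\in S}2^{k-1}$), and $F\circ\mathcal{G}$ denotes substituting coordinate $i$ of $\mathcal{G}$ for $X_i$. The support of a monomial is the set of variables appearing in it. *)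

(* Defs.v *)
From HB Require Import structures.
From mathcomp Require Import all_boot all_order all_algebra.
From mathcomp Require Import mpoly.
Set Implicit Arguments. Unset Strict Implicit. Unset Printing Implicit Defensive.
Import GRing.Theory.
Local Open Scope ring_scope.

Section SSSV.
Variables (K : fieldType) (n k : nat).

Definition nvars_yz : nat := (k + k * n)%N.
Definition Ryz := {mpoly K[nvars_yz]}.

Definition yvar (j : 'I_k) : Ryz := 'X_(lshift (k * n) j).
Definition zvar (j : 'I_k) (i : 'I_n) : Ryz := 'X_(rshift k (mxvec_index j i)).

Definition Ppoly (zj : 'I_n -> Ryz) : {mpoly Ryz[n]} :=
  \prod_(i < n) (zj i *: 'X_i + (1 - zj i)%:MP).

Definition Q_SSV : {mpoly Ryz[n]} := \sum_(j < k) yvar j *: Ppoly (zvar j).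

Definition Q_SSSV : {mpoly Ryz[n]} := Q_SSV + \prod_(i < n) ('X_i + 1).

(* variable index i (0-based, i.e. X_{i+1}) <-> subset S with i = sum_{l in S} 2^l *)
Definition subset_of_index (i : 'I_(2 ^ n)) : {set 'I_n} :=
  [set l : 'I_n | odd (i %/ 2 ^ l)].

Definition mono_of_set (S : {set 'I_n}) : 'X_{1..n} :=
  [multinom ((l \in S) : nat) | l < n].

Definition G_SSSV : (2 ^ n).-tuple Ryz :=
  [tuple (Q_SSSV @_ (mono_of_set (subset_of_index i))) | i < 2 ^ n].

End SSSV.

Definition shift_ones (K : fieldType) (N : nat) (F : {mpoly K[N]}) : {mpoly K[N]} :=
  comp_mpoly [tuple ('X_i + 1) | i < N] F.

Definition mono_support (N : nat) (m : 'X_{1..N}) : {set 'I_N} :=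
  [set i : 'I_N | m i != 0%N].

(* Main.v *)
Require Import Defs.
From HB Require Import structures.
From mathcomp Require Import all_boot all_order all_algebra.
From mathcomp Require Import mpoly.
Set Implicit Arguments. Unset Strict Implicit. Unset Printing Implicit Defensive.
Import GRing.Theory.
Local Open Scope ring_scope.

Lemma prodZX (R : comRingType) (n : nat) (I : Type) (r : seq I) (c : I -> R) (m : I -> 'X_{1..n}) :
  \prod_(i <- r) (c i *: 'X_[m i]) = (\prod_(i <- r) c i) *: ('X_[\big[+%MM/0%MM]_(i <- r) m i] : {mpoly R[n]}).
Proof.
elim: r => [|x r IH]; first by rewrite !big_nil mpolyX0 scale1r.
by rewrite !big_cons IH mpolyXD -scalerAl -scalerAr scalerA.
Qed.

Lemma mono_sum_eq (n : nat) (f : {ffun 'I_n -> bool}) (S : {set 'I_n}) :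
  (\big[+%MM/0%MM]_(i < n) (if f i then U_(i) else 0)%MM == mono_of_set S) = (f == [ffun i => i \in S]).
Proof.
have H : forall l, (\big[+%MM/0%MM]_(i < n) (if f i then U_(i) else 0)%MM) l = f l.
  move=> l; rewrite mnm_sumE (bigD1 l) //= big1 ?addn0.
    by case: (f l); rewrite ?mnm1E ?eqxx ?mnm0E.
  by move=> i /negPf Hi; case: (f i); rewrite ?mnm1E ?Hi ?mnm0E.
apply/eqP/eqP => [E|Ef].
  apply/ffunP => l; rewrite ffunE.
  have := H l; rewrite E /mono_of_set mnmE.
  by case: (f l); case: (l \in S).
apply/mnmP => l; rewrite H Ef /mono_of_set mnmE ffunE //.
Qed.

Lemma prod_coef (R : comRingType) (n : nat) (a b : 'I_n -> R) (S : {set 'I_n}) :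
  (\prod_(i < n) (a i *: 'X_i + (b i)%:MP) : {mpoly R[n]})@_(mono_of_set S)
  = \prod_(i < n) (if i \in S then a i else b i).
Proof.
have E : forall i : 'I_n, a i *: 'X_i + (b i)%:MP =
   \sum_(c : bool) (if c then a i else b i) *: ('X_[(if c then U_(i) else 0)%MM] : {mpoly R[n]}).
  by move=> i; rewrite big_bool /= mpolyX0 -alg_mpolyC.
rewrite (eq_bigr _ (fun i _ => E i)) bigA_distr_bigA /=.
rewrite raddf_sum /=.
under eq_bigr => f _ do rewrite prodZX mcoeffZ mcoeffX.
rewrite (bigD1 [ffun i => i \in S]) //= [X in _ + X]big1 ?addr0.
  rewrite mono_sum_eq eqxx mulr1; apply: eq_bigr => i _; rewrite ffunE //.
move=> f Hf.
by rewrite mono_sum_eq (negPf Hf) mulr0.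
Qed.

Lemma comp_comp (R : comRingType) n1 n2 n3 (lq : n1.-tuple {mpoly R[n2]})
  (lr : n2.-tuple {mpoly R[n3]}) (p : {mpoly R[n1]}) :
  comp_mpoly lr (comp_mpoly lq p) = comp_mpoly [tuple comp_mpoly lr (tnth lq i) | i < n1] p.
Proof.
rewrite (comp_mpolyE p lq) (comp_mpolyE p) raddf_sum /=; apply: eq_bigr => m _.
rewrite comp_mpolyZ rmorph_prod; congr (_ *: _); apply: eq_bigr => i _.
by rewrite rmorphXn tnth_mktuple.
Qed.

Lemma bits_inj n : forall s t, (s < 2 ^ n)%N -> (t < 2 ^ n)%N ->
  (forall l, (l < n)%N -> odd (s %/ 2 ^ l) = odd (t %/ 2 ^ l)) -> s = t.
Proof.
elim: n => [|n IH] s t hs ht h.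
  by move: hs ht; rewrite expn0 !ltnS !leqn0 => /eqP -> /eqP ->.
have h0 := h 0%N isT; rewrite expn0 !divn1 in h0.
have e2 : (s %/ 2 = t %/ 2)%N.
  apply: IH; rewrite ?ltn_divLR // -?expnSr //.
  by move=> l hl; rewrite -!divnMA -expnS; apply: h.
by rewrite (div.divn_eq s 2) (div.divn_eq t 2) e2 !modn2 h0.
Qed.

Lemma subset_of_index_inj n : injective (@subset_of_index n).
Proof.
move=> s t /setP E; apply/val_inj/bits_inj => //= l hl.
by have := E (Ordinal hl); rewrite !inE.
Qed.

Lemma restr_coef (K : fieldType) N (T : {set 'I_N}) (H : {mpoly K[N]}) m :
  m \in msupp H -> mono_support m \subset T ->
  (comp_mpoly [tuple if i \in T then 'X_i else 0 | i < N] H)@_m = H@_m.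
Proof.
move=> mH sT; rewrite comp_mpolyEX raddf_sum /=.
have key : forall m', (comp_mpoly [tuple if i \in T then 'X_i else 0 | i < N] ('X_[m'] : {mpoly K[N]}))@_m = (m' == m)%:R :> K.
  move=> m'; rewrite comp_mpolyX; case: (boolP (mono_support m' \subset T)) => hs.
    rewrite (eq_bigr (fun i => 'X_i ^+ m' i)) -?mpolyXE_id ?mcoeffX //.
    move=> i _; rewrite tnth_mktuple; case: ifP => // hi.
    have : i \notin mono_support m'.
      by apply/negP => /(subsetP hs); rewrite hi.
    by rewrite inE negbK => /eqP ->; rewrite !expr0.
  have [i hi1 hi2] := subsetPn hs.
  rewrite (bigD1 i) //= tnth_mktuple (negPf hi2) expr0n.
  move: hi1; rewrite inE => /negPf ->; rewrite mul0r mcoeff0.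
  case: eqP => // E; subst m'; by rewrite sT in hs.
rewrite (bigD1_seq m) ?msupp_uniq //= big1 ?addr0.
  by rewrite mcoeffZ key eqxx mulr1.
by move=> m' hm; rewrite mcoeffZ key (negPf hm) mulr0.
Qed.

Section Psi.
Variables (K : fieldType) (n k : nat) (T : {set 'I_(2 ^ n)}) (d : 'I_(2 ^ n)).

Definition tau (j : 'I_k) : 'I_(2 ^ n) := nth d (enum T) j.
Definition zeta (j : 'I_k) (i : 'I_n) : {mpoly K[2 ^ n]} :=
  ((i \in subset_of_index (tau j)) : nat)%:R.
Definition psi_f (v : 'I_(k + k * n)) : {mpoly K[2 ^ n]} :=
  match split v with
  | inl j => if (j < #|T|)%N then 'X_(tau j) else 0
  | inr r => let p := enum_val (cast_ord (esym (@mxvec_cast k n)) r) in zeta p.1 p.2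
  end.
Definition psi_t := [tuple psi_f v | v < k + k * n].

Lemma psi_y j : comp_mpoly psi_t (yvar K n j) = if (j < #|T|)%N then 'X_(tau j) else 0.
Proof.
rewrite /yvar comp_mpolyXU -tnth_nth tnth_mktuple /psi_f.
by have -> : split (lshift (k * n) j) = inl j := unsplitK (inl _ j).
Qed.

Lemma psi_z j i : comp_mpoly psi_t (zvar K j i) = zeta j i.
Proof.
rewrite /zvar comp_mpolyXU -tnth_nth tnth_mktuple /psi_f.
have -> : split (rshift k (mxvec_index j i)) = inr (mxvec_index j i) := unsplitK (inr _ _).
by rewrite /mxvec_index cast_ordK enum_rankK.
Qed.


Lemma prod_bool (c : 'I_n -> bool) :
  \prod_(i < n) ((c i : nat)%:R : {mpoly K[2 ^ n]}) = ([forall i, c i] : nat)%:R.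
Proof.
case: (boolP [forall i, c i]) => [/forallP H | /forallPn [i Hi]].
  by rewrite big1 // => i _; rewrite H.
by rewrite (bigD1 i) //= (negPf Hi) mul0r.
Qed.

Lemma zeta_prod (S : {set 'I_n}) j :
  \prod_(i < n) (if i \in S then zeta j i else 1 - zeta j i) = ((S == subset_of_index (tau j)) : nat)%:R.
Proof.
rewrite (eq_bigr (fun i => ((((i \in S) == (i \in subset_of_index (tau j)))) : nat)%:R)).
  rewrite prod_bool; congr (_ : nat)%:R; congr nat_of_bool.
  apply/forallP/eqP => [H|->] //; apply/setP => i; exact/eqP/(H i).
move=> i _; rewrite /zeta; case: (i \in S); case: (i \in subset_of_index (tau j)) => /=;
  by rewrite ?subrr ?subr0.
Qed.

Hypothesis hT : (#|T| <= k)%N.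

Lemma sum_tau s :
  \sum_(j < k) (if (j < #|T|)%N then 'X_(tau j) else 0) * ((s == tau j) : nat)%:R
  = if s \in T then 'X_s else 0 :> {mpoly K[2 ^ n]}.
Proof.
case: ifP => sT.
  have hi : (index s (enum T) < #|T|)%N by rewrite cardE index_mem mem_enum.
  pose j0 : 'I_k := Ordinal (leq_trans hi hT).
  have tj0 : tau j0 = s by rewrite /tau /= nth_index ?mem_enum.
  rewrite (bigD1 j0) //= hi tj0 eqxx mulr1 big1 ?addr0 // => j hj.
  case: ifP => hjT; last by rewrite mul0r.
  case: eqP => E; last by rewrite mulr0.
  exfalso; move/eqP: hj; apply; apply/val_inj => /=.
  rewrite E /tau index_uniq ?enum_uniq //; by rewrite -cardE.
rewrite big1 // => j _; case: ifP => hjT; last by rewrite mul0r.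
case: eqP => E; last by rewrite mulr0.
by move: sT; rewrite E /tau -mem_enum mem_nth // -cardE.
Qed.

Lemma psi_G s :
  comp_mpoly psi_t (tnth (G_SSSV K n k) s) = (if s \in T then 'X_s else 0) + 1.
Proof.
rewrite tnth_mktuple /Q_SSSV /Q_SSV mcoeffD raddf_sum /=.
have -> : \prod_(i < n) ('X_i + 1) = \prod_(i < n) ((fun _ => 1) i *: 'X_i + ((fun _ => 1 : Ryz K n k) i)%:MP).
  by apply: eq_bigr => i _; rewrite scale1r mpolyC1.
rewrite prod_coef (_ : \prod_(i < n) (if i \in subset_of_index s then 1 else 1) = 1 :> Ryz K n k); last by rewrite big1 // => i _; case: ifP.
rewrite rmorphD rmorph1.
congr (_ + _); rewrite -(sum_tau s) rmorph_sum /=; apply: eq_bigr => j _.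
rewrite mcoeffZ /Ppoly (prod_coef (zvar K j) (fun i => 1 - zvar K j i)) rmorphM rmorph_prod /= psi_y.
congr (_ * _); rewrite -(inj_eq (@subset_of_index_inj n)) -zeta_prod; apply: eq_bigr => i _.
case: ifP => _; first exact: psi_z.
by rewrite -(psi_z j i) comp_mpolyB comp_mpoly1.
Qed.

End Psi.
Unset Implicit Arguments.

Theorem lemma5p7 (K : fieldType) (n k : nat) (C : {mpoly K[2 ^ n]} -> Prop) :
  (1 <= n)%N -> (1 <= k)%N ->
  (forall F, C F ->
     exists2 m, m \in msupp (shift_ones F) & (#|mono_support m| <= k)%N) ->
  forall F, C F -> F != 0 -> comp_mpoly (G_SSSV K n k) F != 0.
Proof.
move=> hn hk hC F CF F0.
have [m mS mk] := hC F CF.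
have d : 'I_(2 ^ n) by exists 0%N; rewrite expn_gt0.
apply/negP => /eqP H0.
have H1 : comp_mpoly (@psi_t K n k (mono_support m) d) (comp_mpoly (G_SSSV K n k) F) = 0.
  by rewrite H0 comp_mpoly0.
rewrite comp_comp in H1.
have Et : [tuple comp_mpoly (@psi_t K n k (mono_support m) d) (tnth (G_SSSV K n k) i) | i < 2 ^ n]
  = [tuple comp_mpoly [tuple if i \in mono_support m then 'X_i else 0 | i < 2 ^ n]
            (tnth [tuple 'X_i + 1 | i < 2 ^ n] i) | i < 2 ^ n].
  apply: eq_from_tnth => i; rewrite [LHS]tnth_mktuple psi_G // [RHS]tnth_mktuple [tnth _ i]tnth_mktuple.
  by rewrite comp_mpolyD comp_mpoly1 comp_mpolyXU -tnth_nth tnth_mktuple.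
rewrite Et -comp_comp in H1.
have := restr_coef mS (subxx (mono_support m)).
rewrite /shift_ones H1 mcoeff0 => /esym/eqP.
move=> E; move: mS; rewrite mcoeff_msupp; case/negP; exact: E.
Qed.
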